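(* Let $q$ be a prime power and $d$ an integer with $5\le d\le q$. Let $\mathcal C$ be the $[q+1,q+2-d,d]_q$ normalized GDRS code and let $\mathcal V^{(2)}$ be a coset of weight $2$ of $\mathcal C$ with coset leader $\mathbf v_2(j_1,j_2;\gamma_1,\gamma_2)$, $\gamma_1,\gamma_2\in\mathbb F_q^*$. Then the number $B_{d-2}(\mathcal V^{(2)})$ of vectors of weight $d-2$ in $\mathcal V^{(2)}$ does not depend on the positions $j_1,j_2$ and equals $\mathrm P^\times_{q,d-2}(-\gamma_2/\gamma_1)$.
   Context: Normalized GDRS code: the $\mathbb F_q$-linear code of length $q+1$ which is the kernel of the $(d-1)\times(q+1)$ parity check matrix whose first $q$ columns are $(1,m,m^2,\dots,m^{d-2})^{T}$ for $m$ running over all elements of $\mathbb F_q$ (nonzero ones first, then $0$) and whose last column is $(0,\dots,0,1)^{T}$. A coset of weight $W$ is a coset $\mathbf v+\mathcal C$ whose minimum Hamming weight is $W$; a coset leader is a vector of minimum weight in it. $\mathbf v_2(j_1,j_2;\gamma_1,\gamma_2)$ is the vector of $\mathbb F_q^{q+1}$ with $\gamma_1,\gamma_2$ in positions $j_1\ne j_2$ and zeros elsewhere. For $\mu<q-1$ and $\gamma\in\mathbb F_q^*$, $\mathrm P^\times_{q,\mu}(\gamma)$ is the number of $\mu$-element subsets $\{\alpha_1,\dots,\alpha_\mu\}\subset\mathbb F_q^*$ (distinct elements) whose product is $\gamma$. *)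

(* Defs.v *)
From HB Require Import structures.
From mathcomp Require Import all_boot all_order all_algebra all_field.
Set Implicit Arguments. Unset Strict Implicit. Unset Printing Implicit Defensive.
Import GRing.Theory.
Local Open Scope ring_scope.

Definition gdrs_points (F : finFieldType) : seq F :=
  [seq x <- enum F | x != 0] ++ [:: 0].

Definition gdrs_H (F : finFieldType) (d : nat) : 'M[F]_(d.-1, #|F|.+1) :=
  \matrix_(k < d.-1, j < #|F|.+1)
    if (j < #|F|)%N then (nth 0 (gdrs_points F) j) ^+ k
    else (if k == d.-2 :> nat then 1 else 0).

Definition gdrs_code (F : finFieldType) (d : nat) : {set 'rV[F]_(#|F|.+1)} :=
  [set c | gdrs_H F d *m c^T == 0].

Definition wt (F : finFieldType) (n : nat) (x : 'rV[F]_n) : nat :=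
  #|[set i : 'I_n | x 0 i != 0]|.

Definition v2 (F : finFieldType) (n : nat) (j1 j2 : 'I_n) (g1 g2 : F) : 'rV[F]_n :=
  \row_i (if i == j1 then g1 else if i == j2 then g2 else 0).

Definition coset_weight_count (F : finFieldType) (n : nat)
    (C : {set 'rV[F]_n}) (v : 'rV[F]_n) (w : nat) : nat :=
  #|[set x : 'rV[F]_n | (x - v \in C) && (wt x == w)]|.

Definition Pmul (F : finFieldType) (mu : nat) (gamma : F) : nat :=
  #|[set S : {set F} | [&& 0 \notin S, #|S| == mu & \prod_(a in S) a == gamma]]|.

(* Main.v *)
Require Import Defs.
From mathcomp Require Import all_boot all_order all_algebra all_field.
From mathcomp Require Import zify ring lra.
Import GRing.Theory.
Set Implicit Arguments. Unset Strict Implicit. Unset Printing Implicit Defensive.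
Local Open Scope ring_scope.


Definition lin (F : fieldType) (a b : F) : {poly F} := a%:P * 'X - b%:P.

Lemma size_lin (F : fieldType) (a b : F) : (size (lin a b) <= 2)%N.
Proof.
rewrite /lin; apply: leq_trans (size_polyD _ _) _.
rewrite geq_max size_polyN; apply/andP; split.
  by apply: leq_trans (size_polyMleq _ _) _; rewrite size_polyX; case: (size _) (size_polyC_leq1 a) => [|[]].
by apply: leq_trans (size_polyC_leq1 _) _.
Qed.

Lemma size_prod_lin (F : fieldType) (I : Type) (s : seq I) (a b : I -> F) :
  (size (\prod_(t <- s) lin (a t) (b t))%R <= (size s).+1)%N.
Proof.
elim: s => [|x s IH]; first by rewrite big_nil size_poly1.
rewrite big_cons; apply: leq_trans (size_polyMleq _ _) _.
have := size_lin (a x) (b x); move: IH; change (size (x :: s)) with (size s).+1; lia.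
Qed.

Lemma coef_prod_lin (F : fieldType) (I : Type) (s : seq I) (a b : I -> F) :
  (\prod_(t <- s) lin (a t) (b t))`_(size s) = \prod_(t <- s) a t.
Proof.
elim: s => [|x s IH]; first by rewrite !big_nil coefC.
rewrite !big_cons mulrC.
set p := \prod_(t <- s) lin (a t) (b t).
have hp : (size p <= (size s).+1)%N by apply: size_prod_lin.
rewrite {1}/lin mulrBr coefB mulrA coefMX coefMC coefMC.
change (size (x :: s)) with (size s).+1.
rewrite /= IH [p`_ _]nth_default // mul0r subr0; exact: mulrC.
Qed.
Lemma horner_lin (F : fieldType) (a b x : F) : (lin a b).[x] = a * x - b.
Proof. by rewrite /lin !hornerE. Qed.

Definition pt (F : finFieldType) (j : 'I_#|F|.+1) : F := nth 0 (gdrs_points F) j.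
Definition uu (F : finFieldType) (j : 'I_#|F|.+1) : F := if (j < #|F|)%N then pt j else 1.
Definition ww (F : finFieldType) (j : 'I_#|F|.+1) : F := if (j < #|F|)%N then 1 else 0.
Definition DD (F : finFieldType) (j t : 'I_#|F|.+1) : F := uu j * ww t - uu t * ww j.
Definition ee (F : finFieldType) (T : {set 'I_#|F|.+1}) (j : 'I_#|F|.+1) : F :=
  \prod_(t in T) DD j t.

Lemma points_uniq (F : finFieldType) : uniq (gdrs_points F).
Proof.
rewrite /gdrs_points cat_uniq filter_uniq ?enum_uniq //= orbF andbT.
by rewrite mem_filter eqxx.
Qed.

Lemma points_size (F : finFieldType) : size (gdrs_points F) = #|F|.
Proof.
rewrite -(card_uniqP (points_uniq F)); apply: eq_card => x.
rewrite /gdrs_points mem_cat mem_filter mem_enum inE /= andbT.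
by rewrite inE; case: eqP.
Qed.

Lemma pt_inj (F : finFieldType) (j t : 'I_#|F|.+1) :
  (j < #|F|)%N -> (t < #|F|)%N -> pt j = pt t -> j = t.
Proof.
move=> hj ht /eqP; rewrite /pt nth_uniq ?points_size ?points_uniq //.
by move/eqP/val_inj.
Qed.

Lemma DD_nz (F : finFieldType) (j t : 'I_#|F|.+1) : j != t -> DD j t != 0.
Proof.
move=> hjt; rewrite /DD /uu /ww.
case hj: (j < #|F|)%N; case ht: (t < #|F|)%N.
- rewrite !mulr1 subr_eq0; apply/eqP => e.
  by move: hjt; rewrite (pt_inj hj ht e) eqxx.
- by rewrite mulr0 mul1r sub0r oppr_eq0 oner_eq0.
- by rewrite mulr0 mulr1 subr0 oner_eq0.
- have ejt : j = t.
    have ej : val j = #|F| by apply/eqP; rewrite eqn_leq -ltnS ltn_ord leqNgt hj.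
    have et : val t = #|F| by apply/eqP; rewrite eqn_leq -ltnS ltn_ord leqNgt ht.
    by apply: val_inj; rewrite ej et.
  by move: hjt; rewrite ejt eqxx.
Qed.

Lemma DD_self (F : finFieldType) (j : 'I_#|F|.+1) : DD j j = 0.
Proof. by rewrite /DD subrr. Qed.

Lemma H_entry (F : finFieldType) m (k : 'I_m.+1) (j : 'I_#|F|.+1) :
  gdrs_H F m.+2 k j = if (j < #|F|)%N then pt j ^+ k else (k == m :> nat)%:R.
Proof. by rewrite mxE; case: ifP => //; case: eqP. Qed.

Lemma code_row (F : finFieldType) m (y : 'rV[F]_#|F|.+1) (k : 'I_m.+1) :
  y \in gdrs_code F m.+2 -> \sum_j gdrs_H F m.+2 k j * y 0 j = 0.
Proof.
rewrite inE => /eqP/matrixP/(_ k 0); rewrite !mxE => h.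
by rewrite -[RHS]h; apply: eq_bigr => j _; rewrite [y^T _ _]mxE.
Qed.

Lemma key (F : finFieldType) m (y : 'rV[F]_#|F|.+1) (T : {set 'I_#|F|.+1}) :
  y \in gdrs_code F m.+2 -> #|T| = m -> \sum_j y 0 j * ee T j = 0.
Proof.
move=> hy hT.
set Q := \prod_(t <- enum T) lin (ww t) (uu t).
have hsz : size (enum T) = m by rewrite -cardE.
have hs : (size Q <= m.+1)%N by rewrite -hsz; apply: size_prod_lin.
have he : forall j, ee T j = \sum_(k < m.+1) Q`_k * gdrs_H F m.+2 k j.
  move=> j; rewrite /ee -big_enum /=.
  case hj: (j < #|F|)%N.
  - have wj : ww j = 1 by rewrite /ww hj.
    transitivity Q.[uu j].
      rewrite /Q horner_prod; apply: eq_bigr => t _.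
      by rewrite horner_lin /DD wj mulr1 mulrC.
    rewrite (horner_coef_wide _ hs); apply: eq_bigr => k _.
    by rewrite H_entry hj /uu hj.
  - have wj : ww j = 0 by rewrite /ww hj.
    have uj : uu j = 1 by rewrite /uu hj.
    transitivity Q`_m.
      rewrite /Q -hsz coef_prod_lin; apply: eq_bigr => t _.
      by rewrite /DD wj uj mul1r mulr0 subr0.
    rewrite big_ord_recr /= big1 ?add0r.
      by rewrite H_entry hj eqxx mulr1.
    move=> k _; rewrite H_entry hj /=.
    by rewrite (ltn_eqF (ltn_ord k)) mulr0.
under eq_bigr do rewrite he mulr_sumr.
rewrite exchange_big /= big1 // => k _.
transitivity (Q`_k * \sum_j gdrs_H F m.+2 k j * y 0 j); last by rewrite code_row // mulr0.
by rewrite mulr_sumr; apply: eq_bigr => j _; rewrite mulrCA; congr (_ * _); exact: mulrC.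
Qed.

Definition supp (F : finFieldType) n (x : 'rV[F]_n) : {set 'I_n} := [set i | x 0 i != 0].

Lemma code_sub (F : finFieldType) d (y1 y2 : 'rV[F]_#|F|.+1) :
  y1 \in gdrs_code F d -> y2 \in gdrs_code F d -> y1 - y2 \in gdrs_code F d.
Proof.
by rewrite !inE linearB /= mulmxBr => /eqP -> /eqP ->; rewrite subr0.
Qed.

Lemma code_scale (F : finFieldType) d (c : F) (y : 'rV[F]_#|F|.+1) :
  y \in gdrs_code F d -> c *: y \in gdrs_code F d.
Proof.
by rewrite !inE linearZ /= -scalemxAr => /eqP ->; rewrite scaler0.
Qed.

Lemma pad (T : finType) (S B : {set T}) k :
  S \subset B -> (#|S| <= k <= #|B|)%N ->
  exists A : {set T}, [/\ S \subset A, A \subset B & #|A| = k].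
Proof.
move eq: (k - #|S|)%N => n; elim: n S eq => [|n IH] S hn hSB /andP[h1 h2].
  by exists S; split => //; apply/eqP; rewrite eqn_leq h1 -subn_eq0 hn.
have: B :\: S != set0.
  rewrite setD_eq0; apply/negP => hBS.
  have := subset_leq_card hBS; lia.
case/set0Pn => x; rewrite inE => /andP[xS xB].
have [|||A [h3 h4 h5]] := IH (x |: S).
- rewrite cardsU1 xS; lia.
- by rewrite subUset sub1set xB.
- by rewrite cardsU1 xS /=; apply/andP; split => //; lia.
exists A; split => //; apply: subset_trans h3; exact: subsetUr.
Qed.

Lemma ee_zero (F : finFieldType) (T : {set 'I_#|F|.+1}) j : j \in T -> ee T j = 0.
Proof. by move=> hj; rewrite /ee (bigD1 j) //= DD_self mul0r. Qed.

Lemma ee_nz (F : finFieldType) (T : {set 'I_#|F|.+1}) j : j \notin T -> ee T j != 0.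
Proof.
move=> hj; apply/prodf_neq0 => t ht; apply: DD_nz.
by apply: contraNneq hj => ->.
Qed.

Lemma mds (F : finFieldType) m (y : 'rV[F]_#|F|.+1) :
  (m <= #|F|)%N -> y \in gdrs_code F m.+2 -> (#|supp y| <= m.+1)%N -> y = 0.
Proof.
move=> hm hy hs; apply/rowP => i; rewrite mxE; apply/eqP/negPn/negP => hi.
have [||A [h3 h4 h5]] := @pad _ (supp y :\ i) [set~ i] m.
- by apply/subsetP => j; rewrite !inE => /andP[].
- rewrite cardsC1 card_ord /=; move: hs; rewrite (cardsD1 i) inE hi /=.
  by move=> hs; rewrite hm andbT -ltnS.
have iA : i \notin A by apply/negP => /(subsetP h4); rewrite !inE eqxx.
have := key hy h5; rewrite (bigD1 i) //= big1 ?addr0.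
  by move/eqP; rewrite mulf_eq0 (negbTE hi) (negbTE (ee_nz iA)).
move=> j hji; case: (y 0 j =P 0) => [->|/eqP hyj]; first by rewrite mul0r.
by rewrite ee_zero ?mulr0 // (subsetP h3) // !inE hji.
Qed.

Lemma sum2 (F : finFieldType) (y : 'rV[F]_#|F|.+1) (T : {set 'I_#|F|.+1}) j1 j2 :
  j1 != j2 -> supp y \subset T :|: [set j1; j2] ->
  \sum_j y 0 j * ee T j = y 0 j1 * ee T j1 + y 0 j2 * ee T j2.
Proof.
move=> hj hs; rewrite (bigD1 j1) //= (bigD1 j2) 1?eq_sym //= big1 ?addr0 ?addrA //.
move=> j /andP[hj1 hj2]; case: (y 0 j =P 0) => [->|/eqP hyj]; first by rewrite mul0r.
rewrite ee_zero ?mulr0 //.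
have := subsetP hs j; rewrite !inE hyj (negbTE hj1) (negbTE hj2).
by move=> /(_ isT) /orP [].
Qed.


Lemma exists_cw (F : finFieldType) m (U : {set 'I_#|F|.+1}) :
  (1 < #|F|)%N -> #|U| = m.+2 ->
  exists z : 'rV[F]_#|F|.+1, [/\ z \in gdrs_code F m.+2, z != 0 & supp z \subset U].
Proof.
move=> hq hU.
pose sT := {i : 'I_#|F|.+1 | i \in U}.
pose ext (f : {ffun sT -> F}) : 'rV[F]_#|F|.+1 :=
  \row_i odflt 0 (omap f (insub i : option sT)).
have extv : forall f (s : sT), ext f 0 (val s) = f s.
  by move=> f s; rewrite mxE valK.
have extn : forall f i, i \notin U -> ext f 0 i = 0.
  by move=> f i hi; rewrite mxE insubF //; apply/negbTE.
pose Phi f := gdrs_H F m.+2 *m (ext f)^T.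
have : ~~ injectiveb Phi.
  apply/injectiveP => hinj; have := leq_card Phi hinj.
  rewrite card_ffun card_sig card_mx muln1.
  have -> : #|[pred x | x \in U]| = m.+2 by rewrite -hU; apply: eq_card.
  by rewrite leqNgt ltn_exp2l ?ltnSn //; exact: hq.
have subE : forall (A B : 'rV[F]_#|F|.+1) i, (A - B) 0 i = A 0 i - B 0 i.
  by move=> A B i; rewrite !mxE.
case/injectivePn => f [f' hff' hPhi].
exists (ext f - ext f'); split.
- by rewrite inE linearB /= mulmxBr -/(Phi f) -/(Phi f') hPhi subrr.
- apply: contra hff' => /eqP h; apply/eqP/ffunP => s.
  have /rowP/(_ (val s)) := h; rewrite subE -!extv [(0 : 'rV[F]_ _) 0 _]mxE.
  by move/eqP; rewrite subr_eq0 => /eqP.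
- apply/subsetP => i; rewrite inE subE; apply: contraR => hi.
  by rewrite !extn // subrr.
Qed.


Lemma plucker (F : finFieldType) (a b c d : 'I_#|F|.+1) :
  DD a c * DD b d - DD a d * DD b c = DD a b * DD c d.
Proof. rewrite /DD; ring. Qed.

Lemma phi_inj (F : finFieldType) (j1 j2 : 'I_#|F|.+1) : j1 != j2 ->
  {in ~: [set j1; j2] &, injective (fun t => DD j1 t / DD j2 t)}.
Proof.
move=> hj t t'; rewrite !inE => /norP[ht1 ht2] /norP[ht1' ht2'] /eqP.
rewrite eqr_div ?DD_nz 1?eq_sym // => /eqP e.
have : DD j1 j2 * DD t t' = 0 by rewrite -plucker e subrr.
move/eqP; rewrite mulf_eq0 (negbTE (DD_nz hj)) /=.
by apply: contraTeq => htt; apply: DD_nz.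
Qed.

Lemma imset_inj_sub (T1 T2 : finType) (f : T1 -> T2) (A B B' : {set T1}) :
  {in A &, injective f} -> B \subset A -> B' \subset A -> f @: B = f @: B' ->
  B \subset B'.
Proof.
move=> hf hB hB' e; apply/subsetP => t ht.
have : f t \in f @: B' by rewrite -e; apply: imset_f.
case/imsetP => t' ht' eft.
by rewrite (hf _ _ (subsetP hB _ ht) (subsetP hB' _ ht') eft).
Qed.

Lemma supp_sub (F : finFieldType) n (x v : 'rV[F]_n) :
  supp (x - v) \subset supp x :|: supp v.
Proof.
apply/subsetP => i; rewrite !inE !mxE.
case: (x 0 i =P 0) => [->|] //=; rewrite sub0r oppr_eq0; by [].
Qed.

Lemma notin_supp (F : finFieldType) m (x v : 'rV[F]_#|F|.+1) ja jb :
  (m <= #|F|)%N -> (2 < m)%N -> x - v \in gdrs_code F m.+2 -> #|supp x| = m ->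
  supp v = [set ja; jb] -> ja \notin supp x.
Proof.
move=> hm hm2 hc hx hv; apply/negP => hja.
have : x - v = 0.
  apply: (mds hm hc).
  have hs : supp (x - v) \subset supp x :|: [set jb].
    apply/subsetP => i hi; move: (subsetP (supp_sub x v) i hi).
    rewrite hv !inE; case: (x 0 i =P 0) => //= hxi.
    case/orP => // /eqP eij; move: hja; rewrite inE -eij hxi eqxx //.
  apply: leq_trans (subset_leq_card hs) _.
  by rewrite setUC cardsU1 hx; case: (jb \notin _).
move/eqP; rewrite subr_eq0 => /eqP exv.
by move: hx hm2; rewrite exv hv cards2 => <-; case: (ja != jb).
Qed.

Lemma prod_phi (F : finFieldType) (j1 j2 : 'I_#|F|.+1) (T : {set 'I_#|F|.+1}) :
  j1 != j2 -> T \subset ~: [set j1; j2] ->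
  \prod_(a in (fun t => DD j1 t / DD j2 t) @: T) a = ee T j1 / ee T j2.
Proof.
move=> hj hT; rewrite big_imset /=; first by rewrite prodf_div.
by move=> t t' ht ht'; apply: phi_inj; rewrite ?(subsetP hT).
Qed.

Lemma cond_equiv (F : finFieldType) (j1 j2 : 'I_#|F|.+1) (T : {set 'I_#|F|.+1}) (g1 g2 : F) :
  g1 != 0 -> j1 \notin T -> j2 \notin T ->
  (g1 * ee T j1 + g2 * ee T j2 == 0) = (ee T j1 / ee T j2 == - g2 / g1).
Proof.
move=> hg1 h1 h2; rewrite eqr_div ?ee_nz // addr_eq0 mulNr.
by rewrite mulrC.
Qed.

Lemma phiA (F : finFieldType) (j1 j2 : 'I_#|F|.+1) : j1 != j2 ->
  (fun t => DD j1 t / DD j2 t) @: (~: [set j1; j2]) = [set~ 0].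
Proof.
move=> hj; apply/eqP; rewrite eqEcard; apply/andP; split.
  apply/subsetP => a /imsetP [t]; rewrite !inE => /norP [ht1 ht2] ->.
  by rewrite mulf_neq0 ?invr_eq0 ?DD_nz // eq_sym.
rewrite card_in_imset; last exact: phi_inj.
have e := cardsC [set j1; j2]; rewrite cards2 hj card_ord /= in e.
rewrite cardsC1; have aux : forall a k, (2 + k = a.+1)%N -> (a.-1 <= k)%N by move=> a k; lia.
exact: aux e.
Qed.

Unset Implicit Arguments.

Theorem theorem3p4 (F : finFieldType) (d : nat)
    (hd5 : (5 <= d)%N) (hdq : (d <= #|F|)%N)
    (j1 j2 : 'I_(#|F|.+1)) (g1 g2 : F)
    (hj : j1 != j2) (hg1 : g1 != 0) (hg2 : g2 != 0)
    (hcoset : forall x : 'rV[F]_(#|F|.+1),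
        x - v2 j1 j2 g1 g2 \in gdrs_code F d -> (2 <= wt x)%N) :
  coset_weight_count (gdrs_code F d) (v2 j1 j2 g1 g2) (d - 2)
  = Pmul (d - 2) (- g2 / g1).
Proof.
case: d hd5 hdq hcoset => [|[|m]] // hd5 hdq _.
have hm : (m <= #|F|)%N by apply: leq_trans hdq; rewrite leqW // leqW.
have hm2 : (2 < m)%N by [].
have hq : (1 < #|F|)%N by apply: leq_trans hdq.
rewrite /coset_weight_count /Pmul.
rewrite (_ : (m.+2 - 2)%N = m); last by rewrite subn2.
set v := v2 j1 j2 g1 g2.
have hj' : j2 != j1 by rewrite eq_sym.
have vE : forall i, v 0 i = if i == j1 then g1 else if i == j2 then g2 else 0.
  by move=> i; rewrite /v /v2 mxE.
have subE : forall (a b : 'rV[F]_#|F|.+1) i, (a - b) 0 i = a 0 i - b 0 i.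
  by move=> a b i; rewrite !mxE.
have suppv : supp v = [set j1; j2].
  apply/setP => i; rewrite /supp !inE vE.
  case: (i =P j1) => [e|_]; first by rewrite hg1.
  by case: (i =P j2) => [e|_]; [rewrite hg2 | rewrite eqxx].
pose phi := fun t => DD j1 t / DD j2 t.
pose A := ~: [set j1; j2].
pose Tset := [set T : {set 'I_#|F|.+1} | [&& #|T| == m, j1 \notin T, j2 \notin T &
                g1 * ee T j1 + g2 * ee T j2 == 0]].
have TsetA : forall T, T \in Tset -> T \subset A.
  move=> T; rewrite inE => /and4P [_ h1 h2 _]; apply/subsetP => t ht.
  rewrite !inE; apply/norP; split; apply/negP => /eqP et.
    by move: h1; rewrite -et ht.
  by move: h2; rewrite -et ht.
transitivity #|Tset|.
  rewrite -(@card_in_imset _ _ (@supp F _)).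
    apply: eq_card => T; apply/imsetP/idP.
      case=> x; rewrite inE => /andP [hc /eqP hw] ->.
      have hx : #|supp x| = m := hw.
      have n1 : j1 \notin supp x := notin_supp hm hm2 hc hx suppv.
      have n2 : j2 \notin supp x.
        by apply: (notin_supp hm hm2 hc hx (jb := j1)); rewrite suppv setUC.
      rewrite inE hx eqxx n1 n2 /=.
      have x1 : x 0 j1 = 0 by apply/eqP; move: n1; rewrite inE negbK.
      have x2 : x 0 j2 = 0 by apply/eqP; move: n2; rewrite inE negbK.
      have := key hc hx; rewrite (sum2 (y := x - v) hj).
        rewrite !subE x1 x2 !vE eqxx (negbTE hj') eqxx.
        by move/eqP; rewrite !sub0r !mulNr -opprD oppr_eq0.
      by apply: subset_trans (supp_sub x v) _; rewrite suppv.
    move=> hT; have hTA := TsetA T hT.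
    move: hT; rewrite inE => /and4P [/eqP hTm h1 h2 hcond].
    pose U := j1 |: (j2 |: T).
    have hU : #|U| = m.+2.
      rewrite /U cardsU1 cardsU1 hTm !inE (negbTE hj) /= h1 h2.
      by [].
    have [z [hzc hz0 hzU]] := exists_cw hq hU.
    have znz : forall i, i \in U -> z 0 i != 0.
      move=> i hi; apply/negP => /eqP zi; move/negP: hz0; apply; apply/eqP.
      apply: (mds hm hzc).
      have hs : supp z \subset U :\ i.
        apply/subsetP => k hk; rewrite in_setD1 (subsetP hzU _ hk) andbT.
        by apply/eqP => eki; subst k; move: hk; rewrite inE zi eqxx.
      apply: leq_trans (subset_leq_card hs) _.
      by move: hU; rewrite (cardsD1 i U) hi add1n => -[->].
    have UT : U \subset T :|: [set j1; j2].
      apply/subsetP => k; rewrite !inE.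
      by case: (k == j1); case: (k == j2); case: (k \in T).
    have hz := key hzc hTm; rewrite (sum2 hj (subset_trans hzU UT)) in hz.
    have z1nz : z 0 j1 != 0 by apply: znz; rewrite !inE eqxx.
    have z2nz : z 0 j2 != 0 by apply: znz; rewrite !inE eqxx orbT.
    have e1nz := ee_nz h1; have e2nz := ee_nz h2.
    pose lam := - g1 / z 0 j1.
    have lamnz : lam != 0 by rewrite mulf_neq0 ?oppr_eq0 ?invr_eq0.
    have xE : forall i, (lam *: z + v) 0 i = lam * z 0 i + v 0 i.
      by move=> i; rewrite !mxE.
    have hsx : supp (lam *: z + v) = T.
      apply/setP => i; rewrite /supp inE xE vE.
      case: (i =P j1) => [e|/eqP ij1].
        subst i; rewrite (negbTE h1) /lam divfK // addNr eqxx //.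
      case: (i =P j2) => [e|/eqP ij2].
        subst i; rewrite (negbTE h2).
        have ez2 : z 0 j2 = - (z 0 j1 * ee T j1) / ee T j2.
          apply: (mulIf e2nz); rewrite divfK //; apply/eqP.
          by rewrite -addr_eq0 addrC hz.
        have eg2 : g2 = - (g1 * ee T j1) / ee T j2.
          apply: (mulIf e2nz); rewrite divfK //; apply/eqP.
          by rewrite -addr_eq0 addrC.
        rewrite /lam ez2 eg2; apply/negbTE/negPn/eqP.
        by field; rewrite ?z1nz ?e2nz.
      case hiT: (i \in T).
        by rewrite addr0 mulf_neq0 // znz // !inE hiT !orbT.
      have : z 0 i = 0.
        apply/eqP; apply: contraFT hiT => hzi.
        have := subsetP hzU i; rewrite inE hzi => /(_ isT).
        by rewrite !inE (negbTE ij1) (negbTE ij2).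
      by move=> ->; rewrite mulr0 addr0 eqxx.
    exists (lam *: z + v); last by rewrite hsx.
    rewrite inE addrK code_scale //=.
    by change (#|supp (lam *: z + v)| == m); rewrite hsx hTm.
  move=> x x'; rewrite !inE => /andP [hc /eqP hw] /andP [hc' _] e.
  have hx : #|supp x| = m := hw.
  have : x - x' = 0.
    apply: (mds hm).
      have -> : x - x' = (x - v) - (x' - v) by rewrite opprB addrA subrK.
      by apply: code_sub; rewrite inE.
    have hs : supp (x - x') \subset supp x.
      apply/subsetP => i; rewrite /supp !inE subE; apply: contraR.
      rewrite negbK => /eqP xi.
      have : x' 0 i = 0.
        have : i \notin supp x' by rewrite -e inE xi eqxx.
        by rewrite inE negbK => /eqP.
      by move=> ->; rewrite xi subrr.
    by apply: leq_trans (subset_leq_card hs) _; rewrite hx.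
  by move/eqP; rewrite subr_eq0 => /eqP.
have injT : {in Tset &, injective (fun T : {set 'I_#|F|.+1} => phi @: T)}.
  move=> T T' hT hT' e; apply/eqP; rewrite eqEsubset; apply/andP; split.
    exact: (imset_inj_sub (phi_inj hj) (TsetA _ hT) (TsetA _ hT') e).
  exact: (imset_inj_sub (phi_inj hj) (TsetA _ hT') (TsetA _ hT) (esym e)).
rewrite -(card_in_imset injT).
apply: eq_card => S; apply/imsetP/idP.
  case=> T hT ->; have hTA := TsetA T hT.
  move: hT; rewrite /Tset in_set => /and4P [/eqP hTm h1 h2 hc].
  have injTT : {in T &, injective phi}.
    by move=> t t' ht ht'; apply: phi_inj; rewrite ?(subsetP hTA).
  rewrite inE; apply/and3P; split.
  - apply/imsetP => -[t ht e0].
    have : phi t \in [set~ 0].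
      by rewrite -(phiA hj); apply: imset_f; exact: (subsetP hTA).
    by rewrite !inE -e0 eqxx.
  - by rewrite card_in_imset // hTm.
  - by rewrite prod_phi // -cond_equiv.
move=> hS; rewrite inE in hS; case/and3P: hS => h0 /eqP hSm hprod.
pose T := A :&: phi @^-1: S.
have hTA : T \subset A by apply: subsetIl.
have injTT : {in T &, injective phi}.
  by move=> t t' ht ht'; apply: phi_inj; rewrite ?(subsetP hTA).
have himg : phi @: T = S.
  apply/setP => a; apply/imsetP/idP.
    by case=> t; rewrite !inE => /andP [_ ht] ->.
  move=> ha.
  have : a \in phi @: A.
    rewrite phiA // !inE; apply/eqP => a0; move: h0; rewrite -a0 ha //.
  case/imsetP => t htA eat; exists t => //.
  by rewrite inE htA inE -eat.
have h1 : j1 \notin T by apply/negP => /(subsetP hTA); rewrite !inE eqxx.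
have h2 : j2 \notin T by apply/negP => /(subsetP hTA); rewrite !inE eqxx orbT.
exists T; last by rewrite himg.
rewrite inE h1 h2 -(card_in_imset injTT) himg hSm eqxx /=.
by rewrite cond_equiv // -prod_phi // himg.
Qed.
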